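(* Let $q$ be a nonnegative continuous function on $[0,+\infty)$ with $\int_0^{+\infty}tq(t)\,dt<+\infty$, let $h$ be the solution of $h'+h^2-q=0$ with $\lim_{t\to0^+}th(t)=1$, and let $v\in C^2((0,+\infty))$ be the solution of $v''+hv'=0$ with $v'>0$ and $\lim_{t\to0^+}\frac{v(t)}{\log t}=1$. Then $\lim_{t\to+\infty}\frac{v(t)}{\log t}$ exists and $\frac1{I(q)}\le\lim_{t\to+\infty}\frac{v(t)}{\log t}\le1$. Moreover, $\log t+v(1)\ge v(t)\ge\frac1{I(q)}\log t+v(1)$ for all $t>1$.
   Context: $I(q):=\exp\left(\int_0^{+\infty}tq(t)\,dt\right)$. *)

(* Defs.v *)
From Stdlib Require Import Reals.
From Coquelicot Require Export Coquelicot.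
Export Reals.
Open Scope R_scope.

Definition Iq (q : R -> R) : R :=
  exp (RInt_gen (fun t => t * q t) (at_point 0) (Rbar_locally p_infty)).

(* Main.v *)
Require Import Defs.
From Stdlib Require Import Reals Lra.
From Coquelicot Require Import Coquelicot.
Open Scope R_scope.
Ltac fixeta := repeat match goal with |- context [Derive (fun y : R => ?f y) ?x] => change (Derive (fun y : R => f y) x) with (Derive f x) end.

Lemma ball_R (x e y : R) : ball x e y <-> Rabs (y - x) < e.
Proof. reflexivity. Qed.

Lemma mono_le (f df : R -> R) a b : a <= b ->
  (forall x, a <= x <= b -> is_derive f x (df x)) ->
  (forall x, a <= x <= b -> 0 <= df x) -> f a <= f b.
Proof.
  intros Hab Hd Hp.
  destruct (MVT_gen f a b df) as [c [Hc Heq]].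
  - intros x Hx. apply Hd. rewrite Rmin_left, Rmax_right in Hx by lra. lra.
  - intros x Hx. rewrite Rmin_left, Rmax_right in Hx by lra.
    apply continuity_pt_filterlim. apply (ex_derive_continuous f x).
    eexists. apply Hd. lra.
  - rewrite Rmin_left, Rmax_right in Hc by lra.
    assert (0 <= df c * (b - a)) by (apply Rmult_le_pos; [apply Hp; lra| lra]).
    lra.
Qed.

Lemma vlog_up (v : R -> R) c a b : 0 < a <= b ->
  (forall x, a <= x <= b -> ex_derive v x) ->
  (forall x, a <= x <= b -> c <= x * Derive v x) ->
  v a - c * ln a <= v b - c * ln b.
Proof.
  intros Hab Hd Hc.
  apply (mono_le (fun x => v x - c * ln x) (fun x => Derive v x - c / x)); [lra| |].
  - intros x Hx. auto_derive. repeat split; try apply Hd; lra. fixeta. field. lra.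
  - intros x Hx. specialize (Hc x Hx).
    assert (Derive v x - c / x = (x * Derive v x - c) / x) by (field; lra).
    rewrite H. apply Rmult_le_pos. lra. left; apply Rinv_0_lt_compat; lra.
Qed.

Lemma vlog_down (v : R -> R) c a b : 0 < a <= b ->
  (forall x, a <= x <= b -> ex_derive v x) ->
  (forall x, a <= x <= b -> x * Derive v x <= c) ->
  v b - c * ln b <= v a - c * ln a.
Proof.
  intros Hab Hd Hc.
  cut (- (v a - c * ln a) <= - (v b - c * ln b)). lra.
  apply (mono_le (fun x => - (v x - c * ln x)) (fun x => - (Derive v x - c / x))); [lra| |].
  - intros x Hx. auto_derive. repeat split; try apply Hd; lra. fixeta. field. lra.
  - intros x Hx. specialize (Hc x Hx).
    assert (- (Derive v x - c / x) = (c - x * Derive v x) / x) by (field; lra).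
    rewrite H. apply Rmult_le_pos. lra. left; apply Rinv_0_lt_compat; lra.
Qed.

Lemma at_right_eps (f : R -> R) l (eps : R) : filterlim f (at_right 0) (locally l) ->
  0 < eps -> exists d, 0 < d /\ forall s, 0 < s < d -> Rabs (f s - l) < eps.
Proof.
  intros Hf He. apply filterlim_locally with (eps := mkposreal eps He) in Hf.
  destruct Hf as [d Hd]. exists d. split. apply cond_pos.
  intros s Hs. apply (Hd s). apply ball_R. rewrite Rminus_0_r, Rabs_pos_eq; lra. lra.
Qed.

Lemma near0_lo (v : R -> R) c B s1 :
  filterlim (fun t => v t / ln t) (at_right 0) (locally 1) ->
  c < 1 -> 0 < s1 -> (forall s, 0 < s <= s1 -> B + c * ln s <= v s) -> False.
Proof.
  intros Hl Hc Hs1 Hv.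
  set (eps := (1 - c) / 2).
  destruct (at_right_eps _ _ eps Hl) as [d [Hd Hd']]. unfold eps; lra.
  set (s := Rmin (Rmin s1 (d/2)) (Rmin (1/2) (exp (- (Rabs B / eps) - 1)))).
  assert (Hs0 : 0 < s). { unfold s. repeat apply Rmin_pos; try lra. apply exp_pos. }
  assert (Hs1' : s <= s1). { unfold s. eapply Rle_trans; apply Rmin_l. }
  assert (Hsd : s < d). { unfold s. eapply Rle_lt_trans. eapply Rle_trans; [apply Rmin_l| apply Rmin_r]. lra. }
  assert (Hsl : ln s <= - (Rabs B / eps) - 1).
  { rewrite <- (ln_exp (- (Rabs B / eps) - 1)). apply ln_le. lra.
    unfold s. eapply Rle_trans; [apply Rmin_r| apply Rmin_r]. }
  specialize (Hv s (conj Hs0 Hs1')). specialize (Hd' s (conj Hs0 Hsd)).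
  set (L := ln s) in *. set (y := v s / L) in *.
  assert (HL : L < 0). { assert (0 <= Rabs B / eps). apply Rmult_le_pos. apply Rabs_pos.
    left; apply Rinv_0_lt_compat; unfold eps; lra. lra. }
  assert (Hvy : v s = y * L) by (unfold y; field; lra).
  rewrite Hvy in Hv.
  assert (Hy : y - c > eps) by (apply Rabs_def2 in Hd'; unfold eps in *; lra).
  assert ((y - c) * L < eps * L) by nra.
  assert (eps * L <= - Rabs B - eps).
  { assert (eps * L <= eps * (- (Rabs B / eps) - 1)) by (apply Rmult_le_compat_l; unfold eps in *; lra).
    replace (eps * (- (Rabs B / eps) - 1)) with (- Rabs B - eps) in H0 by (field; unfold eps; lra). lra. }
  pose proof (Rle_abs B). pose proof (Rle_abs (-B)). rewrite Rabs_Ropp in *. assert (eps > 0) by (unfold eps; lra).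
  assert ((y - c) * L = y * L - c * L) by ring. lra.
Qed.

Lemma near0_hi (v : R -> R) c B s1 :
  filterlim (fun t => v t / ln t) (at_right 0) (locally 1) ->
  1 < c -> 0 < s1 -> (forall s, 0 < s <= s1 -> v s <= B + c * ln s) -> False.
Proof.
  intros Hl Hc Hs1 Hv.
  set (eps := (c - 1) / 2).
  destruct (at_right_eps _ _ eps Hl) as [d [Hd Hd']]. unfold eps; lra.
  set (s := Rmin (Rmin s1 (d/2)) (Rmin (1/2) (exp (- (Rabs B / eps) - 1)))).
  assert (Hs0 : 0 < s). { unfold s. repeat apply Rmin_pos; try lra. apply exp_pos. }
  assert (Hs1' : s <= s1). { unfold s. eapply Rle_trans; apply Rmin_l. }
  assert (Hsd : s < d). { unfold s. eapply Rle_lt_trans. eapply Rle_trans; [apply Rmin_l| apply Rmin_r]. lra. }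
  assert (Hsl : ln s <= - (Rabs B / eps) - 1).
  { rewrite <- (ln_exp (- (Rabs B / eps) - 1)). apply ln_le. lra.
    unfold s. eapply Rle_trans; [apply Rmin_r| apply Rmin_r]. }
  specialize (Hv s (conj Hs0 Hs1')). specialize (Hd' s (conj Hs0 Hsd)).
  set (L := ln s) in *. set (y := v s / L) in *.
  assert (HL : L < 0). { assert (0 <= Rabs B / eps). apply Rmult_le_pos. apply Rabs_pos.
    left; apply Rinv_0_lt_compat; unfold eps; lra. lra. }
  assert (Hvy : v s = y * L) by (unfold y; field; lra).
  rewrite Hvy in Hv.
  assert (Hy : c - y > eps) by (apply Rabs_def2 in Hd'; unfold eps in *; lra).
  assert ((c - y) * L < eps * L) by nra.
  assert (eps * L <= - Rabs B - eps).
  { assert (eps * L <= eps * (- (Rabs B / eps) - 1)) by (apply Rmult_le_compat_l; unfold eps in *; lra).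
    replace (eps * (- (Rabs B / eps) - 1)) with (- Rabs B - eps) in H0 by (field; unfold eps; lra). lra. }
  pose proof (Rle_abs (-B)). pose proof (Rle_abs B). rewrite Rabs_Ropp in *. assert (eps > 0) by (unfold eps; lra).
  assert ((c - y) * L = c * L - y * L) by ring. lra.
Qed.

Theorem lemma4p2 (q h v : R -> R)
  (q_nonneg : forall t, 0 <= t -> 0 <= q t)
  (q_cont : forall t, 0 <= t ->
     filterlim q (within (fun x => 0 <= x) (locally t)) (locally (q t)))
  (q_int : ex_RInt_gen (fun t => t * q t) (at_point 0) (Rbar_locally p_infty))
  (h_ode : forall t, 0 < t -> is_derive h t (q t - (h t)^2))
  (h_lim0 : filterlim (fun t => t * h t) (at_right 0) (locally 1))
  (v_d1 : forall t, 0 < t -> ex_derive v t)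
  (v_d2 : forall t, 0 < t -> ex_derive (Derive v) t)
  (v_c2 : forall t, 0 < t -> continuous (Derive (Derive v)) t)
  (v_ode : forall t, 0 < t -> Derive (Derive v) t + h t * Derive v t = 0)
  (v_pos : forall t, 0 < t -> 0 < Derive v t)
  (v_lim0 : filterlim (fun t => v t / ln t) (at_right 0) (locally 1)) :
  (exists L : R,
     filterlim (fun t => v t / ln t) (Rbar_locally p_infty) (locally L) /\
     / Iq q <= L <= 1) /\
  (forall t, 1 < t -> ln t + v 1 >= v t /\ v t >= / Iq q * ln t + v 1).
Proof.
  assert (eh : forall t, 0 < t -> ex_derive h t) by (intros t Ht; eexists; apply h_ode; auto).
  assert (Dh : forall t, 0 < t -> Derive h t = q t - h t ^ 2)
    by (intros t Ht; apply is_derive_unique; auto).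
  assert (DD : forall t, 0 < t -> Derive (Derive v) t = - (h t * Derive v t))
    by (intros t Ht; specialize (v_ode t Ht); lra).
  assert (Hu : forall t, 0 < t -> 1 <= t * h t).
  { intros t0 Ht0. destruct (Rle_lt_dec 1 (t0 * h t0)) as [|Hlt]; auto. exfalso.
    set (m := fun x => (x * h x - 1) / Derive v x).
    assert (Hm : forall a b, 0 < a <= b -> m a <= m b).
    { intros a b Hab. apply (mono_le m (fun x => x * q x / Derive v x)). lra.
      - intros x Hx. unfold m. assert (0 < x) by lra. pose proof (v_pos x H).
        auto_derive. repeat split; auto; lra. fixeta. rewrite Dh, DD by auto. field. lra.
      - intros x Hx. assert (0 < x) by lra. apply Rmult_le_pos.
        apply Rmult_le_pos; [lra| apply q_nonneg; lra].
        left; apply Rinv_0_lt_compat, v_pos; lra. }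
    set (c := - m t0).
    assert (Hc : 0 < c).
    { unfold c, m. pose proof (v_pos t0 Ht0).
      assert (0 < (1 - t0 * h t0) / Derive v t0) by (apply Rdiv_lt_0_compat; lra).
      replace (- ((t0 * h t0 - 1) / Derive v t0)) with ((1 - t0 * h t0) / Derive v t0) by (field; lra). lra. }
    destruct (at_right_eps (fun t => t * h t) 1 c h_lim0 Hc) as [d [Hd Hd']].
    set (s0 := Rmin d t0 / 2).
    assert (Hs0 : 0 < s0) by (unfold s0; pose proof (Rmin_pos d t0 Hd Ht0); lra).
    assert (Hs0d : s0 < d /\ s0 < t0).
    { unfold s0. pose proof (Rmin_l d t0). pose proof (Rmin_r d t0). lra. }
    assert (HD : forall s, 0 < s <= s0 -> Derive v s <= 1).
    { intros s Hs. pose proof (Hm s t0 ltac:(lra)) as H. replace (m t0) with (-c) in H by (unfold c; ring). unfold m in H.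
      pose proof (v_pos s ltac:(lra)).
      assert (s * h s - 1 <= - c * Derive v s).
      { apply (Rmult_le_compat_r (Derive v s)) in H; [|lra].
        replace ((s * h s - 1) / Derive v s * Derive v s) with (s * h s - 1) in H by (field; lra). lra. }
      specialize (Hd' s ltac:(lra)). apply Rabs_def2 in Hd'.
      assert (c * Derive v s < c * 1) by lra.
      apply Rmult_lt_reg_l in H2; lra. }
    apply (near0_lo v 0 (v s0 - s0) s0 v_lim0); [lra|lra|].
    intros s Hs.
    assert (s - v s <= s0 - v s0).
    { apply (mono_le (fun x => x - v x) (fun x => 1 - Derive v x)). lra.
      - intros x Hx. auto_derive. apply v_d1; lra. fixeta. ring.
      - intros x Hx. pose proof (HD x ltac:(lra)). lra. }
    lra. }
  assert (HP : forall a b, 0 < a <= b -> b * Derive v b <= a * Derive v a).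
  { intros a b Hab.
    cut (- (a * Derive v a) <= - (b * Derive v b)). lra.
    apply (mono_le (fun x => - (x * Derive v x)) (fun x => Derive v x * (x * h x - 1))). lra.
    - intros x Hx. assert (0 < x) by lra. auto_derive. apply v_d2; lra. fixeta. rewrite DD by auto. ring.
    - intros x Hx. apply Rmult_le_pos. left; apply v_pos; lra. pose proof (Hu x ltac:(lra)). lra. }
  assert (HP1 : forall t, 0 < t -> t * Derive v t <= 1).
  { intros t0 Ht0. destruct (Rle_lt_dec (t0 * Derive v t0) 1) as [|Hlt]; auto. exfalso.
    apply (near0_hi v (t0 * Derive v t0) (v t0 - (t0 * Derive v t0) * ln t0) t0 v_lim0 Hlt Ht0).
    intros s Hs.
    pose proof (vlog_up v (t0 * Derive v t0) s t0 Hs ltac:(intros; apply v_d1; lra)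
      ltac:(intros x Hx; apply HP; lra)). lra. }
  assert (HP2 : forall e, 0 < e < 1 -> exists s, 0 < s /\ 1 - e < s * Derive v s).
  { intros e He. apply Classical_Prop.NNPP. intros Hn.
    apply (near0_lo v (1 - e) (v 1) 1 v_lim0); [lra|lra|].
    intros s Hs.
    pose proof (vlog_down v (1 - e) s 1 Hs ltac:(intros; apply v_d1; lra)
      ltac:(intros x Hx; destruct (Rle_lt_dec (x * Derive v x) (1 - e)); auto; exfalso; apply Hn; exists x; split; [lra|lra])).
    rewrite ln_1 in H. lra. }

  assert (PF1 : ProperFilter' (at_point (0:R))) by (apply Proper_StrongProper, at_point_filter).
  assert (PF2 : ProperFilter' (Rbar_locally p_infty)) by (apply Proper_StrongProper, Rbar_locally_filter).
  pose proof (@RInt_gen_correct R_CompleteNormedModule _ _ PF1 PF2 _ q_int) as Hl.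
  assert (HIq : Iq q = exp (RInt_gen (fun t => t * q t) (at_point 0) (Rbar_locally p_infty))) by (unfold Iq; reflexivity).
  set (l := RInt_gen (fun t => t * q t) (at_point 0) (Rbar_locally p_infty)) in *.
  set (g := fun x => x * q (Rabs x)).
  assert (Hgc : forall x, continuous g x).
  { intros x. unfold g. apply (continuous_mult (fun x => x) (fun x => q (Rabs x))).
    apply continuous_id.
    intros P0 HP0. pose proof (q_cont (Rabs x) (Rabs_pos x) P0 HP0) as H1.
    pose proof (continuous_Rabs x _ H1) as H2.
    unfold filtermap in *. eapply filter_imp; [|exact H2].
    intros y Hy. apply Hy. apply Rabs_pos. }
  assert (Hgi : forall a b, ex_RInt g a b).
  { intros a b. apply (@ex_RInt_continuous R_CompleteNormedModule). intros; apply Hgc. }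
  set (A := fun t => RInt g 0 t).
  assert (HA : forall x, is_derive A x (g x)).
  { intros x. apply (@is_derive_RInt R_CompleteNormedModule) with 0. apply filter_forall. intros b. apply (@RInt_correct R_CompleteNormedModule), Hgi.
    apply Hgc. }
  assert (Hgp : forall x, 0 <= x -> 0 <= g x).
  { intros x Hx. unfold g. apply Rmult_le_pos; auto. apply q_nonneg, Rabs_pos. }
  assert (HAm : forall a b, 0 <= a <= b -> A a <= A b).
  { intros a b Hab. apply (mono_le A g). lra. intros; apply HA. intros x Hx; apply Hgp; lra. }
  assert (HA0 : forall t, 0 <= t -> 0 <= A t).
  { intros t Ht. replace 0 with (A 0) at 1. apply HAm; lra. unfold A. rewrite RInt_point. reflexivity. }
  assert (HAl : forall t, 0 <= t -> A t <= l).
  { intros t Ht. destruct (Rle_lt_dec (A t) l) as [|Hlt]; auto. exfalso.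
    set (e := A t - l).
    assert (He : 0 < e) by (unfold e; lra).
    specialize (Hl (ball l (mkposreal e He)) (locally_ball _ _)).
    destruct Hl as [Q R HQ HR Himp].
    destruct HR as [M HM].
    set (b := Rmax t M + 1).
    destruct (Himp 0 b HQ (HM b ltac:(unfold b; pose proof (Rmax_r t M); lra))) as [y [Hy1 Hy2]].
    simpl in Hy1, Hy2. apply ball_R in Hy2. simpl in Hy2.
    assert (Hb : A b = y).
    { unfold A. apply (@is_RInt_unique R_CompleteNormedModule). apply (@is_RInt_ext R_CompleteNormedModule (fun t => t * q t)); auto.
      intros x Hx. unfold g. rewrite Rmin_left, Rmax_right in Hx. rewrite Rabs_pos_eq; lra.
      unfold b; pose proof (Rmax_l t M); lra. unfold b; pose proof (Rmax_l t M); lra. }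
    pose proof (HAm t b ltac:(unfold b; pose proof (Rmax_l t M); lra)).
    apply Rabs_def2 in Hy2. change (minus y l) with (y - l) in Hy2. unfold e in *. lra. }
  assert (HAd : forall x, 0 <= x -> is_derive A x (x * q x)).
  { intros x Hx. replace (x * q x) with (g x). apply HA. unfold g. rewrite Rabs_pos_eq; auto. }
  clearbody A.

  set (K := fun x => x * Derive v x * exp (A x - (x * h x - 1))).
  assert (HKm : forall a b, 0 < a <= b -> K a <= K b).
  { intros a b Hab.
    apply (mono_le K (fun x => exp (A x - (x * h x - 1)) * Derive v x * (x * h x - 1) ^ 2)). lra.
    - intros x Hx. assert (0 < x) by lra. unfold K. auto_derive.
      repeat split; auto; first [apply v_d2; lra | apply v_d1; lra | apply eh; lra | (eexists; apply HAd; lra) | idtac].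
      fixeta. rewrite Dh, DD by auto. rewrite (is_derive_unique _ _ _ (HAd x ltac:(lra))). match goal with |- ?a = ?b => change (@eq R a b) end. unfold Rminus. ring.
    - intros x Hx. apply Rmult_le_pos. apply Rmult_le_pos. left; apply exp_pos.
      left; apply v_pos; lra. apply pow2_ge_0. }
  assert (HK : forall t, 0 < t -> 1 <= K t).
  { intros t0 Ht0. destruct (Rle_lt_dec 1 (K t0)) as [|Hlt]; auto. exfalso.
    set (e := (1 - K t0) / 4).
    assert (HK0 : 0 <= K t0).
    { unfold K. apply Rmult_le_pos. apply Rmult_le_pos. lra. left; apply v_pos; lra. left; apply exp_pos. }
    assert (He : 0 < e < 1) by (unfold e; lra).
    destruct (HP2 e He) as [s1 [Hs1 Hs1']].
    destruct (at_right_eps (fun t => t * h t) 1 e h_lim0 ltac:(lra)) as [d [Hd Hd']].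
    set (s := Rmin (Rmin s1 t0) (d / 2)).
    assert (Hs : 0 < s /\ s <= s1 /\ s <= t0 /\ s < d).
    { unfold s. pose proof (Rmin_l (Rmin s1 t0) (d/2)). pose proof (Rmin_r (Rmin s1 t0) (d/2)).
      pose proof (Rmin_l s1 t0). pose proof (Rmin_r s1 t0).
      pose proof (Rmin_pos (Rmin s1 t0) (d/2) (Rmin_pos s1 t0 Hs1 Ht0) ltac:(lra)). lra. }
    pose proof (HKm s t0 ltac:(lra)).
    pose proof (HP s s1 ltac:(lra)).
    specialize (Hd' s ltac:(lra)). apply Rabs_def2 in Hd'.
    pose proof (HA0 s ltac:(lra)).
    assert (exp (- e) <= exp (A s - (s * h s - 1))).
    { destruct (Req_dec (- e) (A s - (s * h s - 1))) as [E|E]. rewrite E; lra.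
      left; apply exp_increasing. lra. }
    pose proof (exp_ineq1 (- e) ltac:(lra)).
    assert ((1 - e) * (1 - e) <= K s).
    { unfold K. apply Rmult_le_compat; lra. }
    unfold e in *. nra. }
  assert (HPlow : forall t, 0 < t -> exp (- l) <= t * Derive v t).
  { intros t Ht. specialize (HK t Ht). unfold K in HK.
    assert (E : t * Derive v t = K t * exp ((t * h t - 1) - A t)).
    { unfold K. rewrite Rmult_assoc, <- exp_plus.
      replace (A t - (t * h t - 1) + (t * h t - 1 - A t)) with 0 by ring. rewrite exp_0. ring. }
    rewrite E. unfold K.
    pose proof (Hu t Ht). pose proof (HAl t ltac:(lra)).
    assert (exp (- l) <= exp (t * h t - 1 - A t)).
    { destruct (Req_dec (- l) (t * h t - 1 - A t)) as [E'|E']. rewrite E'; lra.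
      left; apply exp_increasing. lra. }
    pose proof (exp_pos (t * h t - 1 - A t)). nra. }
  assert (HinvI : / Iq q = exp (- l)) by (rewrite HIq, exp_Ropp; reflexivity).
  rewrite HinvI.
  clear HK HKm K.

  split.
  2:{ intros t Ht. split.
      - pose proof (vlog_down v 1 1 t ltac:(lra) ltac:(intros; apply v_d1; lra)
          ltac:(intros x Hx; apply HP1; lra)). rewrite ln_1 in H. lra.
      - pose proof (vlog_up v (exp (- l)) 1 t ltac:(lra) ltac:(intros; apply v_d1; lra)
          ltac:(intros x Hx; apply HPlow; lra)). rewrite ln_1 in H. lra. }
  set (E := fun y => exists t, 0 < t /\ y = - (t * Derive v t)).
  destruct (completeness E) as [M [HM1 HM2]].
  { exists (- exp (- l)). intros y [t [Ht ->]]. pose proof (HPlow t Ht). lra. }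
  { exists (- (1 * Derive v 1)). exists 1. split; [lra|reflexivity]. }
  exists (- M).
  assert (HL1 : forall t, 0 < t -> - M <= t * Derive v t).
  { intros t Ht. assert (E (- (t * Derive v t))) by (exists t; split; [lra|reflexivity]).
    pose proof (HM1 _ H). lra. }
  assert (HL2 : exp (- l) <= - M).
  { assert (M <= - exp (- l)). apply HM2. intros y [t [Ht ->]]. pose proof (HPlow t Ht). lra. lra. }
  assert (HL3 : - M <= 1) by (pose proof (HL1 1 ltac:(lra)); pose proof (HP1 1 ltac:(lra)); lra).
  assert (HL4 : forall e, 0 < e -> exists T, 0 < T /\ T * Derive v T < - M + e).
  { intros e He. apply Classical_Prop.NNPP. intros Hn.
    assert (M <= M - e). apply HM2. intros y [t [Ht ->]].
    destruct (Rle_lt_dec (- M + e) (t * Derive v t)). lra. exfalso; apply Hn; exists t; split; auto. lra. }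
  split; [|lra].
  apply filterlim_locally. intros eps.
  destruct (HL4 (eps / 2)) as [T [HT HT']]. pose proof (cond_pos eps); lra.
  set (T1 := Rmax T 1).
  assert (HT1 : T <= T1 /\ 1 <= T1) by (unfold T1; split; [apply Rmax_l|apply Rmax_r]).
  set (C1 := v T1 - (- M) * ln T1).
  set (N := exp (2 * Rabs C1 / eps + 1) + T1).
  exists N. intros t Ht.
  assert (HtT : T1 < t) by (unfold N in Ht; pose proof (exp_pos (2 * Rabs C1 / eps + 1)); lra).
  assert (Hlt : 2 * Rabs C1 / eps + 1 < ln t).
  { rewrite <- (ln_exp (2 * Rabs C1 / eps + 1)). apply ln_increasing. apply exp_pos. unfold N in Ht; lra. }
  assert (HlT1 : 0 <= ln T1) by (rewrite <- ln_1; apply ln_le; lra).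
  pose proof (vlog_up v (- M) T1 t ltac:(lra) ltac:(intros; apply v_d1; lra)
    ltac:(intros x Hx; apply HL1; lra)) as Hup.
  pose proof (vlog_down v (- M + eps / 2) T1 t ltac:(lra) ltac:(intros; apply v_d1; lra)
    ltac:(intros x Hx; pose proof (HP T x ltac:(lra)); lra)) as Hdn.
  apply ball_R.
  set (Lt := ln t) in *. set (y := v t / Lt).
  assert (HLt : 0 < Lt).
  { assert (0 <= 2 * Rabs C1 / eps). apply Rmult_le_pos. pose proof (Rabs_pos C1); lra.
    left; apply Rinv_0_lt_compat, cond_pos. lra. }
  assert (Hvy : v t = y * Lt) by (unfold y; field; lra).
  rewrite Hvy in Hup, Hdn. fold C1 in Hup.
  assert (Hc : 2 * Rabs C1 < eps * Lt).
  { assert (2 * Rabs C1 / eps * eps < (Lt - 1) * eps). apply Rmult_lt_compat_r. apply cond_pos. lra.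
    replace (2 * Rabs C1 / eps * eps) with (2 * Rabs C1) in H. pose proof (cond_pos eps). assert ((Lt-1)*eps = eps*Lt - eps) by ring. lra. field. pose proof (cond_pos eps); lra. }
  pose proof (Rle_abs C1). pose proof (Rle_abs (- C1)). rewrite Rabs_Ropp in H0.
  assert (Hl1 : (y - - M) * Lt >= C1).
  { replace ((y - - M) * Lt) with (y * Lt - - M * Lt) by ring. lra. }
  assert (Hl2 : (y - - M) * Lt <= C1 + eps / 2 * Lt).
  { assert (0 <= eps / 2 * ln T1). apply Rmult_le_pos; auto. pose proof (cond_pos eps); lra.
    assert (E1 : (y - - M) * Lt = y * Lt - (- M + eps / 2) * Lt + eps / 2 * Lt) by ring.
    assert (E2 : v T1 - (- M + eps / 2) * ln T1 = C1 - eps / 2 * ln T1) by (unfold C1; ring).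
    lra. }
  apply Rabs_def1.
  - apply (Rmult_lt_reg_r Lt); auto. nra.
  - apply (Rmult_lt_reg_r Lt); auto. nra.
Qed.
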